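(* Let $(M,d)$ be a metric space, $A\subseteq M$ finite and $\beta>0$. For all $r,k>0$: (i) $\mathrm{Cr}^\beta_{r,k}(A)\subseteq\mathrm{Cov}_{(1+\beta^{-1})r,k}(A)$, and (ii) $\mathrm{Cov}_{r,k}(A)\subseteq\mathrm{Cr}^\beta_{\max\{1,2\beta\}r,k}(A)$.
   Context: $\bar B_d(x,r)=\{y\in M:d(x,y)\le r\}$. For finite $A\subseteq M$, $k>0$, $x\in M$, the $k$-core distance $\mathrm{core}^A_k(x)\in[0,\infty]$ is the distance from $x$ to its $\lceil k\rceil$-th nearest neighbor in $A$ (each point of $A$ counted once, $x$ itself counting if $x\in A$); equivalently $\mathrm{core}^A_k(x)=\min\{r\ge0:|\bar B_d(x,r)\cap A|\ge k\}$, and it is $\infty$ if $k>|A|$. The multicover bifiltration is $\mathrm{Cov}_{r,k}(A)=\{x\in M:|\bar B_d(x,r)\cap A|\ge k\}$. For $\beta>0$, $\Lambda^\beta_k(a,x)=\max\{\beta\,\mathrm{core}^A_k(a),d(a,x)\}$ ($a\in A$, $x\in M$), $B^\beta_{r,k}(a)=\{x\in M:\Lambda^\beta_k(a,x)\le r\}$, and the core bifiltration is $\mathrm{Cr}^\beta_{r,k}(A)=\bigcup_{a\in A}B^\beta_{r,k}(a)$. *)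

(* Defs.v *)
From HB Require Import structures.
From mathcomp Require Import all_boot all_order all_algebra.
From mathcomp Require Import finmap.
From mathcomp Require Import all_classical all_reals ereal.
Set Implicit Arguments. Unset Strict Implicit. Unset Printing Implicit Defensive.
Import Order.TTheory GRing.Theory Num.Theory.
Local Open Scope ring_scope.
Local Open Scope classical_set_scope.


Definition is_metric (R : realType) (M : Type) (d : M -> M -> R) : Prop :=
  [/\ forall x y, 0 <= d x y,
      forall x y, d x y = 0 <-> x = y,
      forall x y, d x y = d y x &
      forall x y z, d x z <= d x y + d y z].

Definition ball_count (R : realType) (M : choiceType) (d : M -> M -> R)
  (A : {fset M}) (x : M) (r : R) : nat :=
  #|` [fset a in A | d x a <= r]%fset |%fset.

(* k-core distance: min { r >= 0 : |B(x,r) ∩ A| >= k } in [0, +oo];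
   +oo when no such r exists (i.e. k > |A|). The inf is attained when finite. *)
Definition core_dist (R : realType) (M : choiceType) (d : M -> M -> R)
  (A : {fset M}) (k : R) (x : M) : \bar R :=
  ereal_inf [set (r%:E) | r in [set r : R | 0 <= r /\ k <= (ball_count d A x r)%:R]].

Definition Cov (R : realType) (M : choiceType) (d : M -> M -> R)
  (A : {fset M}) (r k : R) : set M :=
  [set x | k <= (ball_count d A x r)%:R].

Definition Lambda (R : realType) (M : choiceType) (d : M -> M -> R)
  (A : {fset M}) (beta k : R) (a x : M) : \bar R :=
  Order.max ((beta%:E) * core_dist d A k a)%E (d a x)%:E.

Definition Bcore (R : realType) (M : choiceType) (d : M -> M -> R)
  (A : {fset M}) (beta r k : R) (a : M) : set M :=
  [set x | (Lambda d A beta k a x <= r%:E)%E].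

Definition Cr (R : realType) (M : choiceType) (d : M -> M -> R)
  (A : {fset M}) (beta r k : R) : set M :=
  \bigcup_(a in [set a | a \in A]) Bcore d A beta r k a.

(* Main.v *)
Require Import Defs.
From HB Require Import structures.
From mathcomp Require Import all_boot all_order all_algebra.
From mathcomp Require Import finmap.
From mathcomp Require Import all_classical all_reals ereal.
From mathcomp Require Import ring lra.
Import Order.TTheory GRing.Theory Num.Theory.
Local Open Scope ring_scope.
Local Open Scope classical_set_scope.
Section H.
Variables (R : realType) (M : choiceType) (d : M -> M -> R) (A : {fset M}).

Lemma count_mono x y s t :
  (forall b, b \in A -> d x b <= s -> d y b <= t) ->
  (ball_count d A x s <= ball_count d A y t)%N.
Proof.
move=> H; apply: fsubset_leq_card; apply/fsubsetP => b.
rewrite !inE => /andP[hA h]; rewrite hA /=; exact: H.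
Qed.

Lemma rc_seq (s : seq M) (f : M -> R) t :
  exists2 e, 0 < e & forall b, b \in s -> f b <= t + e -> f b <= t.
Proof.
elim: s => [|c s [e e0 He]]; first by exists 1 => //.
have [hc|hc] := leP (f c) t.
  exists e => // b; rewrite inE => /orP[/eqP->|]//; exact: He.
exists (Num.min e ((f c - t) / 2)).
  by rewrite lt_min e0 divr_gt0 // subr_gt0.
move=> b; rewrite inE => /orP[/eqP->|hb] h.
  have : f c <= t + (f c - t) / 2.
    apply: (le_trans h); rewrite lerD2l; by rewrite ge_min lexx orbT.
  move=> h2; exfalso; move: h2; apply/negP; rewrite -ltNge.
  have : 0 < f c - t by rewrite subr_gt0.
  move=> hp; lra.
apply: He => //; apply: (le_trans h); rewrite lerD2l; by rewrite ge_min lexx.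
Qed.

Lemma count_rc x t : exists2 e, 0 < e &
  (ball_count d A x (t + e) <= ball_count d A x t)%N.
Proof.
have [e e0 He] := rc_seq A (d x) t.
exists e => //; apply: count_mono => b hb; exact: He.
Qed.
End H.

Theorem mainTheorem3 (R : realType) (M : choiceType) (d : M -> M -> R)
  (A : {fset M}) (beta : R) :
  is_metric d -> 0 < beta ->
  forall r k : R, 0 < r -> 0 < k ->
    Cr d A beta r k `<=` Cov d A ((1 + beta^-1) * r) k /\
    Cov d A r k `<=` Cr d A beta (Num.max 1 (2 * beta) * r) k.
Proof.
move=> [d0 _ dsym dtri] b0 r k r0 k0; split.
  move=> x [a /= hA]; rewrite /Bcore /Lambda /= ge_max => /andP[hc hd].
  rewrite lee_fin in hd.
  have [e e0 He] := @count_rc _ _ d A x ((1 + beta^-1) * r).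
  have hlt : (core_dist d A k a < (r * beta^-1 + e)%:E)%E.
    move: hc; case: (core_dist d A k a) => [c'| |] hc.
    - rewrite -EFinM lee_fin in hc; rewrite lte_fin.
      have : c' <= r * beta^-1 by rewrite ler_pdivlMr // mulrC.
      lra.
    - by move: hc; rewrite mulry gtr0_sg // mul1e.
    - exact: ltNyr.
  have [y [r1 [r1p hk] <-]] := ereal_inf_lt hlt.
  rewrite lte_fin => hr1.
  rewrite /Cov /=; apply: (le_trans hk); rewrite ler_nat.
  apply: (leq_trans _ He); apply: count_mono => c hcA hcc.
  apply: (le_trans (dtri x a c)); rewrite dsym.
  have -> : (1 + beta^-1) * r = r + r * beta^-1 by ring.
  lra.
move=> x; rewrite /Cov /= => hk.
have : (0 < ball_count d A x r)%N.
  rewrite -(ltr_nat R); exact: lt_le_trans hk.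
rewrite cardfs_gt0 => /fset0Pn [a]; rewrite !inE => /andP[hA hxa].
exists a => //; rewrite /Bcore /Lambda /= ge_max; apply/andP; split; last first.
  rewrite lee_fin dsym; apply: (le_trans hxa); rewrite ler_peMl //.
  - exact: ltW.
  - by rewrite le_max lexx.
have hc : (core_dist d A k a <= (2 * r)%:E)%E.
  apply: ereal_inf_lbound; exists (2 * r) => //; split; first lra.
  apply: (le_trans hk); rewrite ler_nat; apply: count_mono => c hcA hcc.
  apply: (le_trans (dtri a x c)); rewrite dsym; lra.
move: hc; case: (core_dist d A k a) => [c'| |] hc.
- rewrite -EFinM lee_fin; rewrite lee_fin in hc.
  apply: (le_trans (y := 2 * beta * r)).
    have : beta * c' <= beta * (2 * r) by rewrite ler_pM2l.
    lra.
  by rewrite ler_pM2r // le_max lexx orbT.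
- by move: hc; rewrite leye_eq.
- by rewrite mulrNy gtr0_sg // mul1e leNye.
Qed.
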